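(* In the full-information online setting for length-$\ell$ menus of lotteries over $m$ items, when every buyer is one of $V$ known types (arriving in an arbitrary order), there is an algorithm with regret $O\big(m^2H\ell\sqrt T\ln(V\ell)\big)$.
   Context: A length-$\ell$ menu of lotteries over $m$ items consists of entries $(\vec\phi^{(j)},p^{(j)})$, $j=1,\dots,\ell$, with $\vec\phi^{(j)}\in[0,1]^m$, $p^{(j)}\in[0,mH]$, plus the null entry $(\vec0,0)$. A buyer with item values $v(\vec e_i)\in[0,H]$ (additive or unit-demand) selects an entry maximizing $\sum_i v(\vec e_i)\phi^{(j)}[i]-p^{(j)}$ and pays its price (the revenue). In full information the learner observes the revenue of every menu after each round. Regret is $\mathbb E[\max_{\vec\rho}\sum_t u_t(\vec\rho)-\sum_t u_t(\vec\rho_t)]$ over all length-$\ell$ menus. *)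

(* Defs.v *)
From Stdlib Require Lists.List.
From mathcomp Require Import all_boot all_order all_algebra.
From mathcomp Require Import reals exp.
Set Implicit Arguments. Unset Strict Implicit. Unset Printing Implicit Defensive.
Import Order.TTheory GRing.Theory Num.Theory.
Local Open Scope ring_scope.

Section Menus.
Variables (R : realType) (m l : nat).

(* A menu entry (phi, p): lottery phi in [0,1]^m and price p. *)
Definition entry := (('I_m -> R) * R)%type.
(* A length-l menu (the null entry (0,0) is implicit). *)
Definition menu := 'I_l -> entry.

Definition menu_ok (H : R) (rho : menu) : Prop :=
  forall j : 'I_l,
    (forall i : 'I_m, 0 <= (rho j).1 i <= 1) /\ 0 <= (rho j).2 <= m%:R * H.

Definition entry_util (v : 'I_m -> R) (e : entry) : R :=
  \sum_(i < m) v i * e.1 i - e.2.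

(* Maximal buyer utility, including the null entry (utility 0). *)
Definition best_util (v : 'I_m -> R) (rho : menu) : R :=
  \big[Num.max/0]_(j < l) entry_util v (rho j).

(* Revenue: price of the selected utility-maximising entry; ties are broken
   in favour of the highest price (the null entry has price 0). *)
Definition revenue (v : 'I_m -> R) (rho : menu) : R :=
  \big[Num.max/0]_(j < l | entry_util v (rho j) == best_util v rho) (rho j).2.

(* A (possibly randomised) full-information online algorithm: given the
   revenue functions of all previous rounds, it outputs a finitely supported
   distribution over menus, as a list of (probability, menu) pairs. *)
Definition algorithm := seq (menu -> R) -> seq (R * menu).

Definition alg_valid (H : R) (A : algorithm) : Prop :=
  forall h, (forall wr, Stdlib.Lists.List.In wr (A h) -> 0 <= wr.1 /\ menu_ok H wr.2) /\
            \sum_(wr <- A h) wr.1 = 1.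

(* Revenue functions observed before round t (rounds numbered from 0). *)
Definition history (u : nat -> menu -> R) (t : nat) : seq (menu -> R) :=
  [seq u k | k <- iota 0 t].

Definition alg_exp_rev (A : algorithm) (u : nat -> menu -> R) (t : nat) : R :=
  \sum_(wr <- A (history u t)) wr.1 * u t wr.2.

End Menus.

(* Main.v *)
Require Import Defs.
From mathcomp Require Import all_boot all_order all_algebra.
From mathcomp Require Import reals exp sequences.
From mathcomp Require Import ring lra zify.
From Stdlib Require Import Lia FunctionalExtensionality.
Set Implicit Arguments. Unset Strict Implicit. Unset Printing Implicit Defensive.
Import Order.TTheory GRing.Theory Num.Theory.
Local Open Scope ring_scope.

Section LP.
Variables (R : realFieldType) (n : nat) (Rw : finType) (r0 : Rw)
  (a : Rw -> 'rV[R]_n) (b : Rw -> R) (act : pred Rw) (c : 'rV[R]_n).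

Definition dotv (u : 'rV[R]_n) (x : 'cV[R]_n) : R := (u *m x) 0 0.

Lemma dotvBl u u' x : dotv (u - u') x = dotv u x - dotv u' x.
Proof. by rewrite /dotv mulmxBl !mxE. Qed.
Lemma dotvNl u x : dotv (- u) x = - dotv u x.
Proof. by rewrite /dotv mulNmx !mxE. Qed.
Lemma dotv_suml (I : Type) (r : seq I) (P : pred I) (F : I -> 'rV[R]_n) x :
  dotv (\sum_(t <- r | P t) F t) x = \sum_(t <- r | P t) dotv (F t) x.
Proof. by rewrite /dotv mulmx_suml summxE. Qed.
Lemma dotvD u x y : dotv u (x + y) = dotv u x + dotv u y.
Proof. by rewrite /dotv mulmxDr mxE. Qed.
Lemma dotvZ u l x : dotv u (l *: x) = l * dotv u x.
Proof. by rewrite /dotv -scalemxAr mxE. Qed.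
Lemma dotvN u x : dotv u (- x) = - dotv u x.
Proof. by rewrite /dotv mulmxN mxE. Qed.

Definition feas x := forall r, act r -> dotv (a r) x <= b r.
Hypothesis hbdd : forall w : 'cV[R]_n, w != 0 -> exists r, act r /\ 0 < dotv (a r) w.

Definition Mat (g : 'I_n -> Rw) (k : nat) : 'M[R]_n :=
  \matrix_(i < n) (if (i < k)%N then a (g i) else 0).

Definition Inv k g x x0 := [/\ feas x, dotv c x0 <= dotv c x, \rank (Mat g k) = k &
  forall i : 'I_n, (i < k)%N -> dotv (a (g i)) x = b (g i)].

Lemma rowMat (g : 'I_n -> Rw) k (i : 'I_n) :
  row i (Mat g k) = if (i < k)%N then a (g i) else 0.
Proof. exact: rowK. Qed.

Lemma Mat_dot (g : 'I_n -> Rw) k w (i : 'I_n) : (i < k)%N -> dotv (a (g i)) w = (Mat g k *m w) i 0.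
Proof.
move=> ik; have := congr1 (fun M : 'M_(1, 1) => M 0 0) (row_mul i (Mat g k) w).
by rewrite /dotv rowK ik /= => <-; rewrite mxE.
Qed.

Lemma kernel_vec (k : nat) g : (k < n)%N -> \rank (Mat g k) = k ->
  exists w : 'cV[R]_n, w != 0 /\ Mat g k *m w = 0.
Proof.
move=> kn rk.
set K := kermx (Mat g k)^T.
have : \rank K != 0%N by rewrite mxrank_ker mxrank_tr rk subn_eq0 -ltnNge.
rewrite mxrank_eq0 => K0.
have [j hj] : exists j, row j K != 0.
  case: (boolP [exists j, row j K != 0]) => [/existsP//|/existsPn hn].
  by case/eqP: K0; apply/row_matrixP => j; rewrite row0; apply/eqP; rewrite -[_ == _]negbK hn.
exists (row j K)^T; split; first by rewrite trmx_eq0.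
have /sub_kermxP e : (row j K <= K)%MS by apply: row_sub.
by rewrite -[Mat g k]trmxK -trmx_mul e trmx0.
Qed.

Lemma step k g x x0 : (k < n)%N -> Inv k g x x0 -> exists g' x', Inv k.+1 g' x' x0.
Proof.
move=> kn [fx cx rk tight].
have [w [w0 Mw]] := kernel_vec kn rk.
pose w' := if 0 <= dotv c w then w else - w.
have w'0 : w' != 0 by rewrite /w'; case: ifP => // _; rewrite oppr_eq0.
have Mw' : Mat g k *m w' = 0 by rewrite /w'; case: ifP => // _; rewrite mulmxN Mw oppr0.
have cw' : 0 <= dotv c w'.
  by rewrite /w'; case: ifP => // /negbT; rewrite dotvN -ltNge oppr_ge0 => /ltW.
have [r1 [act1 pos1]] := hbdd w'0.
pose P r := act r && (0 < dotv (a r) w').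
pose F r := (b r - dotv (a r) x) / dotv (a r) w'.
have P1 : P r1 by rewrite /P act1 pos1.
case: (arg_minP F P1) => rs Prs minrs.
have /andP [acts poss] := Prs.
pose lam := F rs.
have lam0 : 0 <= lam.
  by rewrite /lam /F divr_ge0 ?subr_ge0 ?fx // ltW.
pose x' := x + lam *: w'.
pose g' := fun i : 'I_n => if (i == k :> nat) then rs else g i.
exists g', x'.
have tw (i : 'I_n) : (i < k)%N -> dotv (a (g i)) w' = 0.
  by move=> ik; rewrite (Mat_dot _ _ ik) Mw' mxE.
split.
- move=> r ar; rewrite /x' dotvD dotvZ.
  case: (ltrP 0 (dotv (a r) w')) => hr.
  + have : lam <= F r by apply: minrs; rewrite /P ar hr.
    rewrite /F ler_pdivlMr // => h.
    by rewrite -lerBrDl.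
  + have := fx r ar; have : lam * dotv (a r) w' <= 0 by rewrite mulr_ge0_le0.
    lra.
- rewrite /x' dotvD dotvZ; have : 0 <= lam * dotv c w' by rewrite mulr_ge0.
  lra.
- have eqM : (Mat g' k.+1 == Mat g k + a rs)%MS.
    apply/andP; split.
    + apply/row_subP => i; rewrite rowMat.
      case: ifP => ik; last by rewrite sub0mx.
      rewrite /g'; case: eqP => [_|ne]; first exact: addsmxSr.
      have ik' : (i < k)%N by rewrite ltn_neqAle (introN eqP ne) -ltnS ik.
      apply: submx_trans (addsmxSl _ _); rewrite -[a (g i)]/(if true then a (g i) else 0).
      by rewrite -ik' -rowMat row_sub.
    + rewrite addsmx_sub; apply/andP; split.
      * apply/row_subP => i; rewrite rowMat; case: ifP => ik; last by rewrite sub0mx.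
        have ik2 : (i < k.+1)%N by apply: ltnW.
        have -> : a (g i) = row i (Mat g' k.+1) by rewrite rowMat ik2 /g' (ltn_eqF ik).
        exact: row_sub.
      * have -> : a rs = row (Ordinal kn) (Mat g' k.+1) by rewrite rowMat /= ltnSn /g' eqxx.
        exact: row_sub.
  rewrite (eqmx_rank eqM).
  have [le1 eq1] := mxrank_leqif_sup (addsmxSl (Mat g k) (a rs)).
  have [le2 _] := mxrank_adds_leqif (Mat g k) (a rs).
  have r1le : (\rank (a rs) <= 1)%N by apply: rank_leq_row.
  apply/eqP; rewrite eqn_leq; apply/andP; split.
    by apply: (leq_trans le2); rewrite rk -[k.+1]addn1 leq_add2l.
  rewrite ltnNge; apply/negP => hle.
  have : (\rank (Mat g k) == \rank (Mat g k + a rs)%MS) by rewrite eqn_leq le1 rk hle.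
  rewrite eq1 addsmx_sub => /andP [_ /submxP [D hD]].
  move: poss; rewrite /dotv hD -mulmxA Mw' mulmx0 mxE ltxx //.
- move=> i; rewrite ltnS leq_eqVlt => /orP [/eqP ik|ik].
  + rewrite /g' ik eqxx /x' dotvD dotvZ /lam /F divfK; first by ring.
    by rewrite gt_eqF.
  + rewrite /g' (ltn_eqF ik) /x' dotvD dotvZ tw // mulr0 addr0; exact: tight.
Qed.

Lemma lp_vertex x0 : feas x0 -> exists (g : 'I_n -> Rw) (x : 'cV[R]_n),
  [/\ feas x, dotv c x0 <= dotv c x, (\matrix_(i < n) a (g i)) \in unitmx &
  (\matrix_(i < n) a (g i)) *m x = \col_(i < n) b (g i)].
Proof.
move=> f0.
have all k : (k <= n)%N -> exists g x, Inv k g x x0.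
  elim: k => [_|k IH kn].
    exists (fun _ => r0), x0; split => //.
    have -> : Mat (fun _ => r0) 0 = 0.
      by apply/row_matrixP => i; rewrite rowMat row0.
    by rewrite mxrank0.
  have [g [x I]] := IH (ltnW kn).
  exact: step kn I.
have [g [x [fx cx rk tight]]] := all n (leqnn n).
have eM : Mat g n = \matrix_(i < n) a (g i).
  by apply/row_matrixP => i; rewrite rowMat ltn_ord rowK.
exists g, x; split => //.
  by rewrite -row_full_unit /row_full -eM rk.
apply/matrixP => i j; rewrite (ord1 j) -eM -Mat_dot ?ltn_ord // tight ?ltn_ord //.
by rewrite mxE.
Qed.
End LP.

Lemma expR_le2 (R : realType) (y : R) : 0 <= y <= 1/2 -> expR y <= 1 + y + 2 * y^+2.
Proof.
move=> /andP [y0 y1].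
have h1 : expR y * (1 - y) <= 1.
  have := expR_ge1Dx (- y); rewrite expRN => h.
  have ep := expR_gt0 y.
  have : expR y * (1 - y) <= expR y * (expR y)^-1 by apply: ler_wpM2l; [exact: ltW|].
  by rewrite divff ?gt_eqF.
have ep := expR_gt0 y.
nra.
Qed.

Section Hedge.
Variables (R : realType) (E : finType) (e0 : E) (g : nat -> E -> R) (eta B : R).
Hypotheses (hg : forall t e, 0 <= g t e <= B) (heta : 0 < eta) (hetaB : eta * B <= 1/2).

Definition Sg t e := \sum_(k < t) g k e.
Definition wt t e := expR (eta * Sg t e).
Definition Wt t := \sum_e wt t e.
Definition pt t e := wt t e / Wt t.
Definition ghat t := \sum_e pt t e * g t e.
Definition Ghat T := \sum_(t < T) ghat t.

Lemma wt_le_Wt t e : wt t e <= Wt t.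
Proof.
rewrite /Wt (bigD1 e) //= lerDl; apply: sumr_ge0 => i _; exact: expR_ge0.
Qed.

Lemma Wt_gt0 t : 0 < Wt t.
Proof. exact: lt_le_trans (expR_gt0 _) (wt_le_Wt t e0). Qed.

Lemma Wstep t : Wt t.+1 <= Wt t * expR (eta * ghat t + 2 * eta^+2 * B^+2).
Proof.
set K := 2 * eta^+2 * B^+2.
have W0 := Wt_gt0 t.
have B0 : 0 <= B by have /andP [h1 h2] := hg 0 e0; exact: le_trans h2.
apply: (@le_trans _ _ (Wt t * (1 + eta * ghat t + K))); last first.
  apply: ler_wpM2l; first exact: ltW.
  rewrite -addrA; exact: expR_ge1Dx.
apply: (@le_trans _ _ (\sum_e (wt t e * (1 + eta * g t e + K)))).
  rewrite /Wt; apply: ler_sum => e _.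
  rewrite /wt /Sg big_ord_recr /= mulrDr expRD; apply: ler_wpM2l; first exact: expR_ge0.
  have /andP [g0 gB] := hg t e.
  have y0 : 0 <= eta * g t e by apply: mulr_ge0 => //; exact: ltW.
  have y1 : eta * g t e <= eta * B by apply: ler_wpM2l => //; exact: ltW.
  apply: le_trans (expR_le2 _) _; first by rewrite y0 /=; exact: le_trans y1 hetaB.
  rewrite lerD2l /K; nra.
have -> : \sum_e (wt t e * (1 + eta * g t e + K)) =
   \sum_e (wt t e + eta * (Wt t * (pt t e * g t e)) + K * wt t e).
  apply: eq_bigr => e _; rewrite /pt; field; by rewrite gt_eqF.
rewrite !big_split /= -!mulr_sumr -/(Wt t) -/(ghat t).
by rewrite le_eqVlt; apply/orP; left; apply/eqP; ring.
Qed.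

Lemma Wbound T : Wt T <= #|E|%:R * expR (eta * Ghat T + 2 * eta^+2 * B^+2 * T%:R).
Proof.
elim: T => [|T IH].
  rewrite /Ghat big_ord0 mulr0 mulr0 addr0 expR0 mulr1 /Wt.
  under eq_bigr do rewrite /wt /Sg big_ord0 mulr0 expR0.
  by rewrite sumr_const.
apply: le_trans (Wstep T) _.
apply: le_trans (ler_wpM2r (expR_ge0 _) IH) _.
rewrite -[X in X <= _]mulrA -expRD /Ghat big_ord_recr /= -/(Ghat T) -addn1 natrD.
by rewrite le_eqVlt; apply/orP; left; apply/eqP; congr (_ * expR _); ring.
Qed.

Lemma hedge_regret T e :
  Sg T e - Ghat T <= ln #|E|%:R / eta + 2 * eta * B^+2 * T%:R.
Proof.
have N0 : (0 < #|E|%:R :> R) by rewrite ltr0n; apply/card_gt0P; exists e0.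
have h := le_trans (wt_le_Wt T e) (Wbound T).
have := h; rewrite -(ler_ln) ?posrE ?mulr_gt0 ?expR_gt0 // /wt expRK lnM ?posrE ?expR_gt0 // expRK.
move=> hh.
rewrite -(ler_pM2l heta).
have -> : eta * (ln #|E|%:R / eta + 2 * eta * B ^+ 2 * T%:R) =
   ln #|E|%:R + 2 * eta^+2 * B ^+ 2 * T%:R by field; rewrite gt_eqF.
lra.
Qed.
End Hedge.

Section Inst.
Variables (R : realType) (m l V : nat) (H : R) (types : 'I_V -> 'I_m -> R).
Hypotheses (hH : 0 < H) (hl : (0 < l)%N).

Local Notation d := (l * m.+1)%N.
Local Notation menuT := (menu R m l).

Definition X (x : 'cV[R]_d) (j : 'I_l) (i : 'I_m.+1) : R := x (mxvec_index j i) 0.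
Definition mv (x : 'cV[R]_d) : menuT := fun j => (fun i => X x j (lift ord0 i), X x j ord0).
Definition coord (rho : menuT) j (i : 'I_m.+1) : R :=
  match unlift ord0 i with Some i' => (rho j).1 i' | None => (rho j).2 end.
Definition vm (rho : menuT) : 'cV[R]_d := (mxvec (\matrix_(j, i) coord rho j i))^T.

Lemma X_vm rho j i : X (vm rho) j i = coord rho j i.
Proof. by rewrite /X /vm mxE mxvecE mxE. Qed.

Lemma mv_vm rho : mv (vm rho) = rho.
Proof.
apply: functional_extensionality => j; rewrite /mv X_vm /coord unlift_none.
have -> : (fun i => X (vm rho) j (lift ord0 i)) = (rho j).1.
  by apply: functional_extensionality => i; rewrite X_vm /coord liftK.
by case: (rho j).
Qed.

Lemma dot_mxvec (C : 'M[R]_(l, m.+1)) x :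
  dotv (mxvec C) x = \sum_j \sum_i C j i * X x j i.
Proof.
rewrite /dotv mxE (reindex _ (curry_mxvec_bij _ _)) /= [RHS]pair_big /=.
by apply: eq_bigr => -[j i] _ /=; rewrite mxvecE.
Qed.

Definition uoptM (v : 'I_m -> R) (rho : menuT) (o : option 'I_l) : R :=
  match o with Some j => entry_util v (rho j) | None => 0 end.
Definition priceM (rho : menuT) (o : option 'I_l) : R :=
  match o with Some j => (rho j).2 | None => 0 end.

Definition coefU (v : 'I_m -> R) (i : 'I_m.+1) : R :=
  match unlift ord0 i with Some i' => v i' | None => -1 end.
Definition UM v (o : option 'I_l) : 'M[R]_(l, m.+1) :=
  \matrix_(j, i) (if o == Some j then coefU v i else 0).

Lemma dot_UM v o x : dotv (mxvec (UM v o)) x = uoptM v (mv x) o.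
Proof.
rewrite dot_mxvec; case: o => [j0|] /=.
- rewrite (bigD1 j0) //= [Y in _ + Y]big1 ?addr0; last first.
    move=> j nj; apply: big1 => i _; rewrite mxE.
    case: eqP => [[e]|]; last by rewrite mul0r.
    by rewrite e eqxx in nj.
  under eq_bigr do rewrite mxE eqxx.
  rewrite big_ord_recl /coefU unlift_none /entry_util /mv /=.
  under eq_bigr do rewrite liftK.
  rewrite /=; ring.
- apply: big1 => j _; apply: big1 => i _; by rewrite mxE mul0r.
Qed.

Lemma dot_delta j i x : dotv (mxvec (delta_mx j i)) x = X x j i.
Proof. by rewrite mxvec_delta /dotv -rowE mxE. Qed.

Definition PR (o : option 'I_l) : 'rV[R]_d :=
  match o with Some j => mxvec (delta_mx j ord0) | None => 0 end.

Lemma dot_PR o x : dotv (PR o) x = priceM (mv x) o.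
Proof. by case: o => [j|] /=; rewrite ?dot_delta // /dotv mul0mx mxE. Qed.


Definition goodo v (rho : menuT) (o : option 'I_l) : bool :=
  [forall o', uoptM v rho o' <= uoptM v rho o].

Lemma rev_ge0 (v : 'I_m -> R) (rho : menuT) : 0 <= revenue v rho.
Proof.
rewrite /revenue; apply: (big_rec (fun y => 0 <= y)) => // i y _ hy.
by rewrite le_max hy orbT.
Qed.

Lemma best_ge (v : 'I_m -> R) (rho : menuT) j : entry_util v (rho j) <= best_util v rho.
Proof. by rewrite /best_util (bigD1 j) //= le_max lexx. Qed.

Lemma best_ge0 (v : 'I_m -> R) (rho : menuT) : 0 <= best_util v rho.
Proof.
rewrite /best_util; apply: (big_rec (fun y => 0 <= y)) => // i y _ hy.
by rewrite le_max hy orbT.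
Qed.

Lemma rev_ge (v : 'I_m -> R) (rho : menuT) o : goodo v rho o -> priceM rho o <= revenue v rho.
Proof.
case: o => [j|] /= /forallP hg; last exact: rev_ge0.
have hb : best_util v rho = entry_util v (rho j).
  apply/eqP; rewrite eq_le best_ge andbT /best_util.
  apply: (big_rec (fun y => y <= entry_util v (rho j))).
    by have := hg None.
  by move=> i y _ hy; rewrite ge_max hy andbT; have := hg (Some i).
by rewrite /revenue (bigD1 j) /= ?hb ?eqxx // le_max lexx.
Qed.

Lemma rev_pat (v : 'I_m -> R) (rho : menuT) : menu_ok H rho ->
  exists o, goodo v rho o && (priceM rho o == revenue v rho).
Proof.
move=> ok.
set B := best_util v rho.
have hB : B = 0 \/ exists j, B = entry_util v (rho j).
  rewrite /B /best_util; apply: (big_rec (fun y => y = 0 \/ exists j, y = entry_util v (rho j))).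
    by left.
  move=> i y _ hy; case: (lerP (entry_util v (rho i)) y) => h.
    by [].
  by right; exists i.
have hR : revenue v rho = 0 \/ exists j, entry_util v (rho j) == B /\ revenue v rho = (rho j).2.
  rewrite /revenue; apply: (big_rec (fun y => y = 0 \/ exists j, entry_util v (rho j) == B /\ y = (rho j).2)).
    by left.
  move=> i y Pi hy; case: (lerP (rho i).2 y) => h.
    by [].
  by right; exists i.
have goodj j : entry_util v (rho j) = B -> goodo v rho (Some j).
  move=> e; apply/forallP => -[j'|] /=; rewrite e; [exact: best_ge|exact: best_ge0].
case: hR => [r0|[j [/eqP ej rj]]]; last first.
  by exists (Some j); rewrite goodj //= rj eqxx.
case: hB => [b0|[j bj]].
  exists None; rewrite r0 eqxx andbT; apply/forallP => -[j'|] //=.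
  by rewrite -b0; exact: best_ge.
exists (Some j); rewrite goodj //= r0.
have := rev_ge (goodj j (esym bj)); rewrite r0 /= => h.
have [_ /andP [p0 _]] := ok j.
by rewrite eq_le h p0.
Qed.

Lemma rev_le (v : 'I_m -> R) (rho : menuT) : menu_ok H rho -> revenue v rho <= m%:R * H.
Proof.
move=> ok; have mH : 0 <= m%:R * H by rewrite mulr_ge0 // ltW.
rewrite /revenue; apply: (big_rec (fun y => y <= m%:R * H)) => // i y _ hy.
have [_ /andP [_ p1]] := ok i.
by rewrite ge_max hy p1.
Qed.


Definition Rw := ((('I_V * option 'I_l) * option 'I_l) + (('I_l * 'I_m.+1) * bool))%type.
Definition hi (i : 'I_m.+1) : R := if i == ord0 then m%:R * H else 1.
Definition aR (r : Rw) : 'rV[R]_d :=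
  match r with
  | inl (k, o, o') => mxvec (UM (types k) o') - mxvec (UM (types k) o)
  | inr (j, i, true) => mxvec (delta_mx j i)
  | inr (j, i, false) => - mxvec (delta_mx j i)
  end.
Definition bR (r : Rw) : R :=
  match r with inr (_, i, true) => hi i | _ => 0 end.

Definition boxb (x : 'cV[R]_d) : bool :=
  [forall j, forall i, (0 <= X x j i) && (X x j i <= hi i)].
Definition menu0 : menuT := fun _ => (fun _ => 0, 0).
Definition Ex := {ffun 'I_d -> Rw}.
Definition expert (G : Ex) : menuT :=
  let M := \matrix_(i < d) aR (G i) in
  let y := invmx M *m \col_(i < d) bR (G i) in
  if (M \in unitmx) && boxb y then mv y else menu0.

Lemma hi_lift i : hi (lift ord0 i) = 1.
Proof. by rewrite /hi eq_sym (negbTE (neq_lift _ _)). Qed.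
Lemma hi0 : hi ord0 = m%:R * H.
Proof. by rewrite /hi eqxx. Qed.

Lemma boxb_ok x : boxb x -> menu_ok H (mv x).
Proof.
move=> /forallP hb j; split.
  by move=> i; have /forallP := hb j; move=> /(_ (lift ord0 i)); rewrite hi_lift.
by have /forallP := hb j; move=> /(_ ord0); rewrite hi0.
Qed.

Lemma menu0_ok : menu_ok H menu0.
Proof. by move=> j; split => [i|] /=; rewrite ?lexx ?ler01 ?mulr_ge0 // ltW. Qed.

Lemma expert_ok G : menu_ok H (expert G).
Proof.
rewrite /expert; case: ifP => [/andP [_ hb]|_]; [exact: boxb_ok | exact: menu0_ok].
Qed.

Lemma cover_lemma (rho : menuT) (T : nat) (s : nat -> 'I_V) : menu_ok H rho ->
  exists G : Ex, \sum_(t < T) revenue (types (s t)) rho <=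
                 \sum_(t < T) revenue (types (s t)) (expert G).
Proof.
move=> ok.
pose pat k := odflt None [pick o | goodo (types k) rho o && (priceM rho o == revenue (types k) rho)].
have patP k : goodo (types k) rho (pat k) && (priceM rho (pat k) == revenue (types k) rho).
  rewrite /pat; case: pickP => [o h //|h0].
  by have [o ho] := rev_pat (types k) ok; rewrite h0 in ho.
pose act (r : Rw) := match r with inl (k, o, _) => o == pat k | inr _ => true end.
pose c := \sum_(t < T) PR (pat (s t)).
have r0 : Rw := inr (Ordinal hl, ord0, true).
have hbdd : forall w : 'cV[R]_d, w != 0 -> exists r, act r /\ 0 < dotv (aR r) w.
  move=> w w0.
  have [cc hc] : exists cc, w cc 0 != 0.
    case: (boolP [exists cc, w cc 0 != 0]) => [/existsP//|/existsPn hn].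
    case/eqP: w0; apply/matrixP => cc j; rewrite (ord1 j) mxE; apply/eqP.
    by rewrite -[_ == _]negbK hn.
  case/mxvec_indexP: cc hc => j i hc.
  case: (ltrP 0 (w (mxvec_index j i) 0)) => h.
    by exists (inr (j, i, true)); rewrite /= dot_delta.
  exists (inr (j, i, false)); rewrite /= dotvNl dot_delta /X oppr_gt0 lt_neqAle h andbT //.
have f0 : feas aR bR act (vm rho).
  move=> [[[k o] o']|[[j i] []]] /= ar.
  - move/eqP: ar => ->; rewrite dotvBl !dot_UM mv_vm subr_le0.
    by have /andP [/forallP g _] := patP k; exact: g.
  - rewrite dot_delta X_vm /coord; case: (unliftP ord0 i) => [i' ->|->].
      by rewrite hi_lift; have [/(_ i') /andP [_ ?] _] := ok j.
    by rewrite hi0; have [_ /andP [_ ?]] := ok j.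
  - rewrite dotvNl dot_delta X_vm /coord oppr_le0; case: (unliftP ord0 i) => [i' _|_].
      by have [/(_ i') /andP [? _] _] := ok j.
    by have [_ /andP [? _]] := ok j.
have [g [x [fx cx Mu Mx]]] := lp_vertex r0 c hbdd f0.
exists [ffun i => g i].
have eG : expert [ffun i => g i] = mv x.
  rewrite /expert.
  have eM : (\matrix_(i < d) aR ([ffun i => g i] i)) = \matrix_(i < d) aR (g i).
    by apply/row_matrixP => i; rewrite !rowK ffunE.
  have ecol : (\col_(i < d) bR ([ffun i => g i] i)) = \col_(i < d) bR (g i).
    by apply/matrixP => i j; rewrite !mxE ffunE.
  rewrite eM ecol Mu /= -Mx mulKmx //.
  have -> : boxb x.
    apply/forallP => j; apply/forallP => i; apply/andP; split.
      by have := fx (inr (j, i, false)) erefl; rewrite /= dotvNl dot_delta oppr_le0.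
    by have := fx (inr (j, i, true)) erefl; rewrite /= dot_delta.
  by [].
rewrite eG.
apply: (@le_trans _ _ (\sum_(t < T) priceM (mv x) (pat (s t)))); last first.
  apply: ler_sum => t _; apply: rev_ge; apply/forallP => o'.
  have := fx (inl (s t, pat (s t), o')) (eqxx _).
  by rewrite /= dotvBl !dot_UM subr_le0.
have e1 : \sum_(t < T) revenue (types (s t)) rho = dotv c (vm rho).
  rewrite /c dotv_suml; apply: eq_bigr => t _; rewrite dot_PR mv_vm.
  by have /andP [_ /eqP ->] := patP (s t).
have e2 : \sum_(t < T) priceM (mv x) (pat (s t)) = dotv c x.
  by rewrite /c dotv_suml; apply: eq_bigr => t _; rewrite dot_PR.
by rewrite e1 e2.
Qed.

End Inst.

Definition hedgeAlg (R : realType) m l (E : finType) (ex : E -> menu R m l) (eta : R)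
  : algorithm R m l :=
  fun h => [seq (expR (eta * \sum_(f <- h) f (ex e)) /
                 (\sum_(e' : E) expR (eta * \sum_(f <- h) f (ex e'))), ex e) | e <- index_enum E].

Lemma In_map_ex (A B : Type) (f : A -> B) (s : seq A) y :
  Stdlib.Lists.List.In y (map f s) -> exists x, y = f x.
Proof.
elim: s => //= x s IH [<-|h]; first by exists x.
exact: IH.
Qed.

Lemma hedge_valid (R : realType) m l (E : finType) (e0 : E) (ex : E -> menu R m l) (eta : R) H :
  (forall e, menu_ok H (ex e)) -> alg_valid H (hedgeAlg ex eta).
Proof.
move=> ok h; split.
  move=> wr hin; have [e ->] := In_map_ex hin; split; last exact: ok.
  by apply: divr_ge0; [exact: expR_ge0 | apply: sumr_ge0 => i _; exact: expR_ge0].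
rewrite big_map -mulr_suml divff // gt_eqF //.
apply: lt_le_trans (expR_gt0 (eta * \sum_(f <- h) f (ex e0))) _.
by rewrite (bigD1 e0) //= lerDl; apply: sumr_ge0 => i _; exact: expR_ge0.
Qed.

Lemma hist_sum (R : realType) m l (u : nat -> menu R m l -> R) t rho :
  \sum_(f <- history u t) f rho = \sum_(k < t) u k rho.
Proof. by rewrite /history big_map -(subn0 t) -/(index_iota 0 t) big_mkord subn0. Qed.

Lemma hedge_rev (R : realType) m l (E : finType) (ex : E -> menu R m l) (eta : R)
  (u : nat -> menu R m l -> R) t :
  alg_exp_rev (hedgeAlg ex eta) u t = ghat (fun t e => u t (ex e)) eta t.
Proof.
rewrite /alg_exp_rev /hedgeAlg big_map /ghat /pt /wt /Wt /Sg /=.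
apply: eq_bigr => e _; by rewrite !hist_sum; under eq_bigr do rewrite hist_sum.
Qed.

Lemma ln2_ge (R : realType) : 1/2 <= ln (2 : R).
Proof.
have h : expR (1/2 : R) <= 2.
  apply: le_trans (expR_le2 _) _; first by rewrite !divr_ge0 //= ler_pdivrMr // mul1r ler1n.
  by rewrite -[leRHS]/(1 + 1) ; lra.
have : ln (expR (1/2 : R)) <= ln 2 by rewrite ler_ln ?posrE ?expR_gt0.
by rewrite expRK.
Qed.

Lemma L_ge (R : realType) (V l : nat) : (1 < V)%N -> (0 < l)%N -> 1/2 <= ln (V%:R * l%:R : R).
Proof.
move=> hV hl; apply: le_trans (ln2_ge R) _.
rewrite ler_ln ?posrE ?mulr_gt0 ?ltr0n //; last by apply: ltn_trans hV.
rewrite -natrM ler_nat; apply: (leq_trans hV); rewrite -{1}(muln1 V) leq_mul2l hl orbT //.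
Qed.

Lemma lnK_bound (R : realType) (K V l m : nat) : (1 < V)%N -> (0 < l)%N -> (0 < m)%N ->
  (0 < K)%N -> (K <= 8 * (V * l) * l * m)%N ->
  ln (K%:R : R) <= 20 * m%:R * ln (V%:R * l%:R).
Proof.
move=> hV hl hm hK hKle.
set L := ln (V%:R * l%:R : R).
have hL : 1/2 <= L := L_ge R hV hl.
have V0 : (0 < V)%N by apply: ltn_trans hV.
have h1 : ln (K%:R : R) <= ln 8 + L + ln l%:R + ln m%:R.
  apply: le_trans (_ : ln ((8 * (V * l) * l * m)%N%:R) <= _).
    by rewrite ler_ln ?posrE ?ltr0n ?ler_nat // !muln_gt0 V0 hl hm.
  rewrite !natrM !lnM ?posrE ?mulr_gt0 ?ltr0n //.
  by rewrite /L lnM ?posrE ?ltr0n.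
have h8 : ln (8 : R) < 8 by apply: ln_sublinear.
have hmm : ln (m%:R : R) < m%:R by apply: ln_sublinear; rewrite ltr0n.
have hll : ln (l%:R : R) <= L.
  rewrite /L ler_ln ?posrE ?mulr_gt0 ?ltr0n // -natrM ler_nat leq_pmull //.
have m1 : (1 : R) <= m%:R by rewrite ler1n.
have p1 : 0 <= (m%:R - 1) * L by apply: mulr_ge0; lra.
have p2 : 0 <= m%:R * (2 * L - 1) by apply: mulr_ge0; lra.
nra.
Qed.

Lemma Ghat_ge0 (R : realType) (E : finType) (g : nat -> E -> R) eta T :
  (forall t e, 0 <= g t e) -> 0 <= Ghat g eta T.
Proof.
move=> hg; apply: sumr_ge0 => t _; apply: sumr_ge0 => e _; apply: mulr_ge0 => //.
apply: divr_ge0; first exact: expR_ge0.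
by apply: sumr_ge0 => i _; exact: expR_ge0.
Qed.


Lemma hedge_num (R : realType) (m l V T : nat) (H sT : R) :
  (1 < V)%N -> (0 < l)%N -> (0 < m)%N -> 0 < H -> 0 < sT -> sT * sT = T%:R ->
  ln (((V * l.+1 * l.+1 + l * m.+1 * 2) ^ (l * m.+1))%N%:R : R) / (2 * H * sT)^-1 +
    2 * (2 * H * sT)^-1 * (m%:R * H) ^+ 2 * T%:R <=
  100 * m%:R ^+ 2 * H * l%:R * sT * ln (V%:R * l%:R).
Proof.
move=> hV1 hl hm hH sT0 sTT.
have hL : 1/2 <= ln (V%:R * l%:R : R) := L_ge R hV1 hl.
  set K := (V * l.+1 * l.+1 + l * m.+1 * 2)%N.
  set dd := (l * m.+1)%N.
  have K0 : (0 < K)%N by rewrite /K; lia.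
  have lnE : ln ((K ^ dd)%:R : R) = ln K%:R * dd%:R by rewrite natrX lnXn ?ltr0n // mulr_natr.
  rewrite lnE.
  have hKle : (K <= 8 * (V * l) * l * m)%N by rewrite /K; nia.
  have hK := lnK_bound R hV1 hl hm K0 hKle.
  have lnK0 : 0 <= ln (K%:R : R) by apply: ln_ge0; rewrite ler1n.
  have hd : (dd%:R : R) <= 2%:R * m%:R * l%:R by rewrite -!natrM ler_nat /dd; nia.
  set L := ln (V%:R * l%:R : R).
  have {}hL : 1/2 <= L by exact: hL.
  have {}hK : ln K%:R <= 20 * m%:R * L by exact: hK.
  rewrite -sTT.
  have -> : ln K%:R * dd%:R / (2 * H * sT)^-1 + 2 * (2 * H * sT)^-1 * (m%:R * H) ^+ 2 * (sT * sT) =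
      H * sT * (2 * (ln K%:R * dd%:R) + m%:R ^+ 2).
    by field; rewrite !gt_eqF.
  have -> : 100 * m%:R ^+ 2 * H * l%:R * sT * L = H * sT * (100 * m%:R ^+ 2 * l%:R * L) by ring.
  apply: ler_wpM2l; first by apply: mulr_ge0; apply: ltW.
  have s1 : ln K%:R * dd%:R <= 20 * m%:R * L * dd%:R.
    by apply: ler_wpM2r; first by rewrite ler0n.
  have mL0 : 0 <= 20 * m%:R * L.
    apply: mulr_ge0; [apply: mulr_ge0 => //; rewrite ler0n | lra].
  have s2 : 20 * m%:R * L * dd%:R <= 20 * m%:R * L * (2%:R * m%:R * l%:R) by apply: ler_wpM2l.
  have l1 : (1 : R) <= l%:R by rewrite ler1n.
  have lL : L <= l%:R * L.
    have : 0 <= (l%:R - 1) * L by apply: mulr_ge0; lra.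
    lra.
  have s3 : 0 <= m%:R ^+ 2 * (2 * (l%:R * L) - 1).
    apply: mulr_ge0; first by rewrite exprn_ge0 ?ler0n.
    lra.
  have P0 : 0 <= m%:R ^+ 2 * (l%:R * L).
    by apply: mulr_ge0; [rewrite exprn_ge0 ?ler0n | lra].
  have e2 : 20 * m%:R * L * (2%:R * m%:R * l%:R) = 40 * (m%:R ^+ 2 * (l%:R * L)) by ring.
  have e3 : m%:R ^+ 2 * (2 * (l%:R * L) - 1) = 2 * (m%:R ^+ 2 * (l%:R * L)) - m%:R ^+ 2 by ring.
  have e4 : 100 * m%:R ^+ 2 * l%:R * L = 100 * (m%:R ^+ 2 * (l%:R * L)) by ring.
  rewrite e4; rewrite e2 in s2; rewrite e3 in s3.
  lra.
Qed.


Lemma triv_num (R : realType) (m l V T : nat) (H sT : R) :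
  (1 < V)%N -> (0 < l)%N -> (0 < m)%N -> 0 < H -> 0 < sT -> sT * sT = T%:R -> sT < m%:R ->
  T%:R * (m%:R * H) <= 100 * m%:R ^+ 2 * H * l%:R * sT * ln (V%:R * l%:R).
Proof.
move=> hV1 hl hm hH sT0 sTT hmT.
have hL : 1/2 <= ln (V%:R * l%:R : R) := L_ge R hV1 hl.
set L := ln (V%:R * l%:R : R).
have {}hL : 1/2 <= L by exact: hL.
have l1 : (1 : R) <= l%:R by rewrite ler1n.
have lL : L <= l%:R * L.
  have : 0 <= (l%:R - 1) * L by apply: mulr_ge0; lra.
  lra.
rewrite -sTT.
have -> : sT * sT * (m%:R * H) = (H * sT * m%:R) * sT by ring.
have -> : 100 * m%:R ^+ 2 * H * l%:R * sT * L = (H * sT * m%:R) * (m%:R * (100 * (l%:R * L))) by ring.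
have p : 0 <= H * sT * m%:R by apply: mulr_ge0; [apply: mulr_ge0; apply: ltW | rewrite ler0n].
apply: (ler_wpM2l p).
have m0 : (1 : R) <= m%:R by rewrite ler1n.
have : m%:R <= m%:R * (100 * (l%:R * L)).
  rewrite -{1}(mulr1 m%:R); apply: ler_wpM2l; [by rewrite ler0n | lra].
move=> hh; lra.
Qed.

Theorem mainTheorem19 (R : realType) :
  exists C : R, 0 < C /\
  forall (m l V T : nat) (H : R),
    (0 < m)%N -> (0 < l)%N -> (0 < V)%N -> 0 < H ->
    forall types : 'I_V -> 'I_m -> R,
      (forall k i, 0 <= types k i <= H) ->
      exists A : algorithm R m l,
        alg_valid H A /\
        forall s : nat -> 'I_V,
          let u := fun t => revenue (types (s t)) in
          forall rho : menu R m l, menu_ok H rho ->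
            \sum_(t < T) u t rho - \sum_(t < T) alg_exp_rev A u t
            <= C * m%:R ^+ 2 * H * l%:R * Num.sqrt T%:R * ln (V%:R * l%:R).
Proof.
exists 100; split; first by rewrite ltr0n.
move=> m l V T H hm hl hV hH types htypes.
pose E := Ex m l V.
pose ex : E -> menu R m l := @expert R m l V H types.
have e0 : E := [ffun _ => inr (Ordinal hl, ord0, true)].
have exok : forall G, menu_ok H (ex G) by move=> G; exact: expert_ok.
have Lge0 : 0 <= ln (V%:R * l%:R : R).
  by apply: ln_ge0; rewrite -natrM ler1n muln_gt0 hV hl.
have RHS0 : 0 <= 100 * m%:R ^+ 2 * H * l%:R * Num.sqrt T%:R * ln (V%:R * l%:R).
  apply: mulr_ge0 => //; apply: mulr_ge0; last exact: sqrtr_ge0.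
  apply: mulr_ge0; last by rewrite ler0n.
  apply: mulr_ge0; last exact: ltW.
  by apply: mulr_ge0; [rewrite ler0n | rewrite exprn_ge0 // ler0n].
have revB : forall k G, 0 <= revenue (types k) (ex G) <= m%:R * H.
  by move=> k G; apply/andP; split; [exact: rev_ge0 | apply: rev_le => //; exact: exok].
case: (leqP V 1) => hV1.
- pose k0 : 'I_V := Ordinal hV.
  pose Gs := Order.arg_max e0 xpredT (fun G => revenue (types k0) (ex G)).
  exists (fun _ => [:: (1, ex Gs)]); split.
    move=> h; split; last by rewrite big_cons big_nil addr0.
    by move=> wr [<-|[]]; split => //; exact: exok.
  move=> s u rho ok; rewrite /u.
  have sk t : s t = k0.
    apply: val_inj => /=; have := ltn_ord (s t); lia.
  have [G hG] := cover_lemma types hl T s ok.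
  have hmax : forall G', revenue (types k0) (ex G') <= revenue (types k0) (ex Gs).
    by rewrite /Gs; case: arg_maxP => // G1 _ hG1 G'; exact: hG1.
  rewrite /alg_exp_rev.
  under [X in _ - X]eq_bigr do rewrite big_cons big_nil addr0 mul1r.
  apply: le_trans RHS0; rewrite subr_le0; apply: le_trans hG _.
  apply: ler_sum => t _; rewrite sk; exact: hmax.
have hL : 1/2 <= ln (V%:R * l%:R : R) := L_ge R hV1 hl.
case: (posnP T) => [T0|Tpos].
  exists (hedgeAlg ex 1); split; first exact: (@hedge_valid R m l _ e0 ex _ H exok).
  move=> s u rho ok; apply: le_trans RHS0 => /=.
  by rewrite T0 !big_ord0 subrr.
set sT := Num.sqrt T%:R.
have sT0 : 0 < sT by rewrite sqrtr_gt0 ltr0n.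
have sTT : sT * sT = T%:R by rewrite -expr2 sqr_sqrtr // ler0n.
pose eta := (2 * H * sT)^-1.
have heta : 0 < eta by rewrite invr_gt0 !mulr_gt0.
exists (hedgeAlg ex eta); split; first exact: (@hedge_valid R m l _ e0 ex _ H exok).
move=> s u rho ok; rewrite /u.
have [G hG] := cover_lemma types hl T s ok.
under [X in _ - X]eq_bigr do rewrite hedge_rev.
rewrite -/(Ghat _ _ T).
pose g := fun t e => revenue (types (s t)) (ex e).
have hg : forall t e, 0 <= g t e <= m%:R * H by move=> t e; exact: revB.
have G0 : 0 <= Ghat g eta T by apply: Ghat_ge0 => t e; have /andP [] := hg t e.
case: (lerP (m%:R) sT) => hmT.
- have hetaB : eta * (m%:R * H) <= 1/2.
    have e1 : eta * (m%:R * H) * (2 * sT) = m%:R.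
      by rewrite /eta; field; rewrite !gt_eqF.
    nra.
  have hr := hedge_regret e0 hg heta hetaB T G.
  have hreg : \sum_(t < T) revenue (types (s t)) rho - Ghat g eta T <=
      ln #|Ex m l V|%:R / eta + 2 * eta * (m%:R * H) ^+ 2 * T%:R.
    apply: le_trans hr; rewrite lerD2r; exact: hG.
  apply: le_trans hreg _.
  have cardE : #|Ex m l V| = ((V * l.+1 * l.+1 + l * m.+1 * 2) ^ (l * m.+1))%N.
    by rewrite card_ffun card_sum !card_prod !card_option !card_ord card_bool.
  rewrite cardE /eta; exact: (hedge_num hV1 hl hm hH sT0 sTT).
- have h1 : \sum_(t < T) revenue (types (s t)) rho <= T%:R * (m%:R * H).
    apply: (@le_trans _ _ (\sum_(t < T) (m%:R * H))).
      by apply: ler_sum => t _; apply: rev_le.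
    by rewrite sumr_const card_ord [leRHS]mulr_natl.
  apply: (@le_trans _ _ (T%:R * (m%:R * H))).
    apply: le_trans h1; rewrite lerBlDr lerDl; exact: G0.
  exact: (triv_num hV1 hl hm hH sT0 sTT hmT).
Qed.
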